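(* Let $\mathbb{X}^0_1=\mathbb{X}^1_1:=2^\omega$, $\mathbb{A}^0_1:=\{(0^\infty,0^\infty)\}$ and $\mathbb{A}^1_1:=\{(0^i1\alpha,0^i1\beta)\mid i\in\omega,\ \alpha,\beta\in2^\omega\}$. Let $X,Y$ be Polish spaces and $A_0,A_1$ disjoint subsets of $X\times Y$. Then exactly one of the following holds: (a) there is a countable union $S$ of sets $U\times V$ with $U$ open in $X$ and $V$ open in $Y$ such that $A_0\subseteq S$ and $S\cap A_1=\emptyset$; (b) there are continuous maps $f,g:2^\omega\to X,Y$ respectively (i.e. $f:2^\omega\to X$, $g:2^\omega\to Y$) such that $(f\times g)(\mathbb{A}^0_1)\subseteq A_0$ and $(f\times g)(\mathbb{A}^1_1)\subseteq A_1$.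
   Context: $0^i1\alpha$ denotes the element of $2^\omega$ consisting of $i$ zeros, then $1$, then $\alpha$; $0^\infty$ is the constant zero sequence. $(f\times g)(x,y)=(f(x),g(y))$. *)

(* Defs.v *)
From HB Require Import structures.
From mathcomp Require Import all_boot all_order all_algebra.
From mathcomp Require Import all_classical all_reals all_analysis.
From mathcomp Require Import Rstruct Rstruct_topology.
Set Implicit Arguments. Unset Strict Implicit. Unset Printing Implicit Defensive.
Import Order.TTheory GRing.Theory Num.Theory.
Local Open Scope classical_set_scope.
Local Open Scope ring_scope.

Section Polish.
Variable T : topologicalType.

Definition is_metric (d : T -> T -> Rdefinitions.R) : Prop :=
  [/\ (forall x y, 0 <= d x y),
      (forall x y, d x y = 0 <-> x = y),
      (forall x y, d x y = d y x) &
      (forall x y z, d x z <= d x y + d y z)].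

Definition dball (d : T -> T -> Rdefinitions.R) (x : T) (e : Rdefinitions.R) : set T := [set y | d x y < e].

Definition metric_compatible (d : T -> T -> Rdefinitions.R) : Prop :=
  forall A : set T, open A <-> (forall x, A x -> exists2 e : Rdefinitions.R, 0 < e & dball d x e `<=` A).

Definition d_cauchy (d : T -> T -> Rdefinitions.R) (u : nat -> T) : Prop :=
  forall e : Rdefinitions.R, 0 < e -> exists N : nat, forall m n : nat,
    (N <= m)%N -> (N <= n)%N -> d (u m) (u n) < e.

Definition d_complete (d : T -> T -> Rdefinitions.R) : Prop :=
  forall u : nat -> T, d_cauchy d u -> exists l : T, u @ \oo --> l.

Definition separable_space : Prop := exists D : set T, countable D /\ dense D.

Definition polish_space : Prop :=
  separable_space /\
  exists d : T -> T -> Rdefinitions.R, [/\ is_metric d, metric_compatible d & d_complete d].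
End Polish.

Definition zero_seq : cantor_space := fun _ => false.

Definition pad_seq (i : nat) (a : cantor_space) : cantor_space :=
  fun n => if (n < i)%N then false else if n == i then true else a (n - i.+1)%N.

Definition A01 : set (cantor_space * cantor_space) := [set (zero_seq, zero_seq)].
Definition A11 : set (cantor_space * cantor_space) :=
  [set p | exists (i : nat) (a b : cantor_space), p = (pad_seq i a, pad_seq i b)].

Definition prod_map (X Y : Type) (f : cantor_space -> X) (g : cantor_space -> Y)
  (p : cantor_space * cantor_space) : X * Y := (f p.1, g p.2).

(* Main.v *)
Require Import Defs.
From HB Require Import structures.
From mathcomp Require Import all_boot all_order all_algebra.
From mathcomp Require Import all_classical all_reals all_analysis.
From mathcomp Require Import Rstruct Rstruct_topology.
From mathcomp Require Import lra.
Import Order.TTheory GRing.Theory Num.Theory.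
Set Implicit Arguments. Unset Strict Implicit. Unset Printing Implicit Defensive.
Local Open Scope classical_set_scope.
Local Open Scope ring_scope.

Lemma bool_nbhs1 (b : bool) : nbhs b [set b].
Proof. by apply/principal_filterP. Qed.

Lemma cyl_nbhs (a : cantor_space) N :
  nbhs a [set b : cantor_space | forall j, (j < N)%N -> b j = a j].
Proof.
elim: N => [|N IH].
  by apply: (@filterS _ (nbhs a) _ setT) => //; exact: filterT.
have h : nbhs a [set b : cantor_space | b N = a N].
  have := @proj_continuous nat (fun=> bool) N a [set a N] (@bool_nbhs1 (a N)).
  done.
apply: filterS (filterI IH h) => b [H1 H2] j.
rewrite ltnS leq_eqVlt => /orP[/eqP->//|]; exact: H1.
Qed.

Lemma pad_cvg : (fun N => pad_seq N zero_seq) @ \oo --> (zero_seq : cantor_space).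
Proof.
apply/cvg_sup => j U [V] [[W] oW <-] WfN WU.
apply: (filterS WU); rewrite nbhs_simpl; exists j.+1 => // i /= hi.
suff -> : pad_seq i zero_seq j = zero_seq j by [].
by rewrite /pad_seq (leq_trans _ hi).
Qed.

Definition fsel (T : Type) (x : T) (xs : nat -> T) (a : cantor_space) : T :=
  match pselect (exists i, a i) with
  | left h => xs (@ex_minn (fun i => a i) h)
  | right _ => x end.
Arguments fsel {T}.

Lemma fsel_first (T : Type) (x : T) xs (a : cantor_space) i :
  a i -> (forall j, (j < i)%N -> ~~ a j) -> fsel x xs a = xs i.
Proof.
move=> ai hj; rewrite /fsel; case: pselect => [h|h]; last by exfalso; apply: h; exists i.
case: ex_minnP => m am mmin; congr (xs _); apply/eqP; rewrite eqn_leq mmin //=.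
by rewrite leqNgt; apply/negP => /hj; rewrite am.
Qed.

Lemma fsel_none (T : Type) (x : T) xs (a : cantor_space) :
  (forall j, ~~ a j) -> fsel x xs a = x.
Proof.
move=> hj; rewrite /fsel; case: pselect => [[i hi]|//].
by have := hj i; rewrite hi.
Qed.

Lemma fsel_cases (T : Type) (x : T) xs (a : cantor_space) k :
  (forall j, (j < k)%N -> ~~ a j) ->
  fsel x xs a = x \/ exists2 i, (k <= i)%N & fsel x xs a = xs i.
Proof.
move=> hj; rewrite /fsel; case: pselect => [h|h]; last by left.
right; case: ex_minnP => m am _; exists m => //.
by rewrite leqNgt; apply/negP => /hj; rewrite am.
Qed.

Definition r (k : nat) : Rdefinitions.R := (k.+1%:R)^-1.

Lemma r_gt0 k : 0 < r k.
Proof. by rewrite /r invr_gt0 ltr0Sn. Qed.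

Lemma r_half k : r (2 * k + 1)%N * 2 = r k.
Proof.
rewrite /r (_ : (2 * k + 1).+1 = 2 * k.+1)%N; last by rewrite mulnS addn1.
rewrite natrM invfM mulrAC mulVf ?mul1r //.
Qed.

Lemma r_mono k i : (k <= i)%N -> r i <= r k.
Proof.
move=> ki; rewrite /r lef_pV2 ?posrE ?ltr0Sn // ler_nat ltnS //.
Qed.

Lemma r_small (e : Rdefinitions.R) : 0 < e -> exists k, r k < e.
Proof.
move=> e0; exists (Num.Def.trunc e^-1); rewrite /r invf_plt ?posrE ?ltr0Sn //.
exact: truncnS_gt.
Qed.

Section Metric.
Variables (T : topologicalType) (d : T -> T -> Rdefinitions.R).
Hypotheses (hm : is_metric d) (hc : metric_compatible d).

Lemma d_refl x : d x x = 0.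
Proof. by case: hm => _ h _ _; apply/h. Qed.

Lemma d_sym x y : d x y = d y x.
Proof. by case: hm. Qed.

Lemma d_tri x y z : d x z <= d x y + d y z.
Proof. by case: hm. Qed.

Lemma dball_open x e : open (dball d x e).
Proof.
apply/hc => y hy; exists (e - d x y); first by rewrite subr_gt0.
move=> z hz; rewrite /dball /=; have := d_tri x y z.
move: hy hz; rewrite /dball /= => hy hz h; lra.
Qed.

Lemma nbhs_dball x W : nbhs x W -> exists2 e, 0 < e & dball d x e `<=` W.
Proof.
rewrite nbhsE => -[B [oB Bx] BW].
have [e e0 he] := (proj1 (hc B) oB) x Bx.
by exists e => //; apply: subset_trans BW.
Qed.

Lemma fsel_cont x xs : (forall k, d x (xs k) < r k) -> continuous (fsel x xs).
Proof.
move=> hxs a W /= hW.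
case: (pselect (exists i, a i)) => [h|h].
  case: (ex_minnP h) => i ai imin.
  have fa : fsel x xs a = xs i.
    apply: fsel_first => // j ji; apply/negP => aj.
    by have := imin _ aj; rewrite leqNgt ji.
  apply: filterS (cyl_nbhs a i.+1) => b hb.
  change (W (fsel x xs b)).
  have -> : fsel x xs b = xs i.
    apply: fsel_first; first by rewrite hb.
    move=> j ji; rewrite hb ?(ltn_trans ji) //; apply/negP => aj.
    by have := imin _ aj; rewrite leqNgt ji.
  by rewrite -fa; apply: nbhs_singleton.
have fa : fsel x xs a = x.
  by apply: fsel_none => j; apply/negP => aj; apply: h; exists j.
rewrite fa in hW; have [e e0 he] := nbhs_dball hW.
have [k hk] := r_small e0.
apply: filterS (cyl_nbhs a k) => b hb.
change (W (fsel x xs b)).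
have : forall j, (j < k)%N -> ~~ b j.
  by move=> j jk; rewrite hb //; apply/negP => aj; apply: h; exists j.
move/(fsel_cases x xs) => [->|[i ki ->]]; apply: he; rewrite /dball /=.
  by rewrite d_refl.
have := hxs i; have := r_mono ki; lra.
Qed.
End Metric.

Lemma open_const (T : topologicalType) (P : Prop) : open [set _ : T | P].
Proof.
case: (pselect P) => p.
  by rewrite (_ : [set _ | P] = setT); [exact: openT | apply/seteqP; split].
by rewrite (_ : [set _ | P] = set0); [exact: open0 | apply/seteqP; split].
Qed.

Lemma enum_of (T : topologicalType) (D : set T) (x0 : T) :
  countable D -> exists e : nat -> T, forall q, D q -> exists n, e n = q.
Proof.
move=> /countable_injP [h hinj].
exists (fun n => xget x0 [set q | D q /\ h q = n]) => q Dq; exists (h q).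
have [] : [set q' | D q' /\ h q' = h q] (xget x0 [set q' | D q' /\ h q' = h q]).
  by apply: xgetPex; exists q.
by move=> Dq' hq'; apply: hinj; rewrite ?inE.
Qed.

Lemma not_a_b (X Y : topologicalType)
  (hX : polish_space X) (hY : polish_space Y)
  (A0 A1 : set (X * Y)) :
  ~ (exists (U : nat -> set X) (V : nat -> set Y),
      [/\ (forall n, open (U n) /\ open (V n)),
          A0 `<=` \bigcup_n (U n `*` V n) &
          (\bigcup_n (U n `*` V n)) `&` A1 = set0]) ->
  exists (f : cantor_space -> X) (g : cantor_space -> Y),
      [/\ continuous f, continuous g,
          prod_map f g @` A01 `<=` A0 &
          prod_map f g @` A11 `<=` A1].
Proof.
move=> na.
have [[x0 y0] _] : exists p, A0 p.
  apply: contrapT => ne; apply: na; exists (fun=> set0), (fun=> set0); split.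
  - by move=> n; split; exact: open0.
  - by move=> p hp; exfalso; apply: ne; exists p.
  - by apply/seteqP; split => // p [[n _ []]].
case: hX => [[D1 [cD1 dD1]] [d1 [m1 c1 _]]].
case: hY => [[D2 [cD2 dD2]] [d2 [m2 c2 _]]].
have [e1 he1] := enum_of x0 cD1.
have [e2 he2] := enum_of y0 cD2.
pose idx n : nat * nat * nat * nat := odflt (0, 0, 0, 0)%N (unpickle n).
pose ex n := e1 (idx n).1.1.1.
pose rx n := r (idx n).1.1.2.
pose ey n := e2 (idx n).1.2.
pose ry n := r (idx n).2.
pose P n := forall u v, d1 (ex n) u < rx n -> d2 (ey n) v < ry n -> ~ A1 (u, v).
pose U n := [set _ : X | P n] `&` dball d1 (ex n) (rx n).
pose V n := [set _ : Y | P n] `&` dball d2 (ey n) (ry n).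
have [[x y] [hp0 hpn]] : exists p, A0 p /\ ~ (\bigcup_n (U n `*` V n)) p.
  apply: contrapT => ne; apply: na; exists U, V; split.
  - by move=> n; split; apply: openI; [exact: open_const | exact: dball_open |
      exact: open_const | exact: dball_open].
  - by move=> p hp; apply: contrapT => hq; apply: ne; exists p.
  - by apply/seteqP; split => // -[u v] [[n _ [[Pn hu] [_ hv]]] hA]; apply: (Pn u v).
have hk : forall k, exists uv : X * Y, [/\ A1 uv, d1 x uv.1 < r k & d2 y uv.2 < r k].
  move=> k; apply: contrapT => nk.
  pose m := (2 * k + 1)%N.
  have [q [qb Dq]] : (dball d1 x (r m) `&` D1) !=set0.
    apply: dD1; last exact: dball_open.
    by exists x; rewrite /dball /= d_refl // r_gt0.
  have [q' [qb' Dq']] : (dball d2 y (r m) `&` D2) !=set0.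
    apply: dD2; last exact: dball_open.
    by exists y; rewrite /dball /= d_refl // r_gt0.
  have [a ha] := he1 q Dq.
  have [c hc] := he2 q' Dq'.
  pose n := pickle (a, m, c, m).
  have hidx : idx n = (a, m, c, m) by rewrite /idx /n pickleK.
  apply: hpn; exists n => //.
  have Pn : P n.
    move=> u v; rewrite /ex /ey /rx /ry hidx /= ha hc => hu hv hA.
    apply: nk; exists (u, v); split => //=.
      have := d_tri m1 x q u; have := r_half k; move: qb; rewrite /dball /= => qb.
      lra.
    have := d_tri m2 y q' v; have := r_half k; move: qb'; rewrite /dball /= => qb'.
    lra.
  split; split => //; rewrite /dball /= /ex /ey /rx /ry hidx /= ?ha ?hc d_sym //.
have [uv huv] := boolp.choice hk.
pose xs k := (uv k).1.
pose ys k := (uv k).2.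
have fz : forall T (xx : T) xs, fsel xx xs zero_seq = xx by move=> *; apply: fsel_none.
have fp : forall T (xx : T) xs i a, fsel xx xs (pad_seq i a) = xs i.
  move=> T xx xs' i a; apply: fsel_first; first by rewrite /pad_seq ltnn eqxx.
  by move=> j ji; rewrite /pad_seq ji.
exists (fsel x xs), (fsel y ys); split.
- by apply: (fsel_cont m1 c1) => k; have [] := huv k.
- by apply: (fsel_cont m2 c2) => k; have [] := huv k.
- by move=> _ [p -> <-]; rewrite /prod_map /= !fz.
- move=> _ [p [i [a [b ->]]] <-]; rewrite /prod_map /= !fp.
  by have [] := huv i; rewrite /xs /ys -surjective_pairing.
Qed.

Lemma not_both (X Y : topologicalType) (A0 A1 : set (X * Y)) :
  (exists (U : nat -> set X) (V : nat -> set Y),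
      [/\ (forall n, open (U n) /\ open (V n)),
          A0 `<=` \bigcup_n (U n `*` V n) &
          (\bigcup_n (U n `*` V n)) `&` A1 = set0]) ->
  (exists (f : cantor_space -> X) (g : cantor_space -> Y),
      [/\ continuous f, continuous g,
          prod_map f g @` A01 `<=` A0 &
          prod_map f g @` A11 `<=` A1]) -> False.
Proof.
move=> [U [V [hop hsub hdis]]] [f [g [cf cg h0 h1]]].
have : A0 (f zero_seq, g zero_seq) by apply: h0; exists (zero_seq, zero_seq).
move/hsub => [n _ [hu hv]].
have hf := @cvg_comp _ _ _ (fun N => pad_seq N zero_seq) f \oo (nbhs (zero_seq : cantor_space)) (nbhs (f zero_seq)) pad_cvg (cf zero_seq).
have hg := @cvg_comp _ _ _ (fun N => pad_seq N zero_seq) g \oo (nbhs (zero_seq : cantor_space)) (nbhs (g zero_seq)) pad_cvg (cg zero_seq).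
have nu : nbhs (f zero_seq) (U n) by apply: open_nbhs_nbhs; split => //; case: (hop n).
have nv : nbhs (g zero_seq) (V n) by apply: open_nbhs_nbhs; split => //; case: (hop n).
have HU : \forall N \near \oo, U n (f (pad_seq N zero_seq)) := hf _ nu.
have HV : \forall N \near \oo, V n (g (pad_seq N zero_seq)) := hg _ nv.
have [N [HU' HV']] := filter_ex (filterI HU HV).
have hA : A1 (f (pad_seq N zero_seq), g (pad_seq N zero_seq)).
  apply: h1; exists (pad_seq N zero_seq, pad_seq N zero_seq) => //.
  by exists N, zero_seq, zero_seq.
have : ((\bigcup_n (U n `*` V n)) `&` A1) (f (pad_seq N zero_seq), g (pad_seq N zero_seq)).
  by split => //; exists n.

by rewrite hdis.
Qed.

Local Close Scope ring_scope.

Theorem corollary3p8 (X Y : topologicalType)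
  (hX : polish_space X) (hY : polish_space Y)
  (A0 A1 : set (X * Y)) (hdisj : A0 `&` A1 = set0) :
  let alt_a := exists (U : nat -> set X) (V : nat -> set Y),
      [/\ (forall n, open (U n) /\ open (V n)),
          A0 `<=` \bigcup_n (U n `*` V n) &
          (\bigcup_n (U n `*` V n)) `&` A1 = set0] in
  let alt_b := exists (f : cantor_space -> X) (g : cantor_space -> Y),
      [/\ continuous f, continuous g,
          prod_map f g @` A01 `<=` A0 &
          prod_map f g @` A11 `<=` A1] in
  (alt_a \/ alt_b) /\ ~ (alt_a /\ alt_b).
Proof.
move=> alt_a alt_b; split; last by move=> [ha hb]; exact: (not_both ha hb).
case: (pselect alt_a) => ha; first by left.
by right; apply: not_a_b.
Qed.
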